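(* Let $n\ge2$ and let $Q$ be the $2n\times 2n$ matrix with entries given by $Q_{ij}=0$ if $i+j<2n+1$, $Q_{ij}=q^{n(n+e-3)-e}(q-1+\delta_{i+j,2n+1})q^j$ if $i+j\ge 2n+1$ and $j\le n$, and $Q_{ij}=q^{n(n+e-3)-e}\big((q-1+\delta_{i+j,2n+1})q^{j+e-1}+\delta_{ij}q^n(q^e-q)\big)$ if $i+j\ge2n+1$ and $j>n$ (the quotient matrix of the opposition graph on maximal flags of $\mathrm{PS}(n,e,q)$ with respect to types relative to a fixed point). For $i\in[n]$ let $$v_i=(\underbrace{0,\dots,0}_{n-i},\underbrace{q^{e+i-1},\dots,q^{e+i-1}}_{i},\underbrace{-1,\dots,-1}_{i},\underbrace{0,\dots,0}_{n-i})^\top.$$ Then $v_i$ is an eigenvector of $Q$ with eigenvalue $-q^{(n-1)(n-1+e)}$.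
   Context: $\delta$ is the Kronecker delta; $e$ is a real parameter (in applications $e\in\{0,\frac12,1,\frac32,2\}$) and $q$ a prime power. *)

(* Defs.v *)
From HB Require Import structures.
From mathcomp Require Import all_boot all_order all_algebra.
From mathcomp Require Import all_classical all_reals all_analysis.
Set Implicit Arguments. Unset Strict Implicit. Unset Printing Implicit Defensive.
Import Order.TTheory GRing.Theory Num.Theory.
Local Open Scope ring_scope.

Definition kdelta (R : realType) (a b : nat) : R := if a == b then 1 else 0.

Definition prime_power (q : nat) : Prop :=
  exists p k : nat, prime p /\ (0 < k)%N /\ q = (p ^ k)%N.

(* The 2n x 2n quotient matrix Q; row/column indices i, j : 'I_(n.*2) are
   0-based, the paper's 1-based indices are i.+1, j.+1. *)
Definition Qmat (R : realType) (n : nat) (e q : R) : 'M[R]_(n.*2) :=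
  \matrix_(i < n.*2, j < n.*2)
    let i1 := i.+1 in let j1 := j.+1 in
    let c : R := q `^ ((n%:R) * (n%:R + e - 3) - e) in
    let d : R := kdelta R (i1 + j1) (n.*2).+1 in
    if (i1 + j1 < (n.*2).+1)%N then 0
    else if (j1 <= n)%N then c * (q - 1 + d) * q ^+ j1
    else c * ((q - 1 + d) * q `^ (j1%:R + e - 1)
              + kdelta R i1 j1 * q ^+ n * (q `^ e - q)).

Definition vvec (R : realType) (n i : nat) (e q : R) : 'cV[R]_(n.*2) :=
  \col_(k0 < n.*2)
    let k := k0.+1 in
    if ((n - i < k) && (k <= n))%N then q `^ (e + i%:R - 1)
    else if ((n < k) && (k <= n + i))%N then -1
    else 0.

(* Main.v *)
Require Import Defs.
From HB Require Import structures.
From mathcomp Require Import all_boot all_order all_algebra.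
From mathcomp Require Import all_classical all_reals all_analysis.
From mathcomp Require Import ring lra zify.
Import Order.TTheory GRing.Theory Num.Theory.
Set Implicit Arguments. Unset Strict Implicit. Unset Printing Implicit Defensive.
Local Open Scope ring_scope.

Definition Mf (R : realType) (T x : R) (n r j : nat) : R :=
  if (r.+1 + j.+1 < (n.*2).+1)%N then 0
  else if (j.+1 <= n)%N then (T - 1 + @kdelta R (r.+1 + j.+1) (n.*2).+1) * T ^+ j.+1
  else (T - 1 + @kdelta R (r.+1 + j.+1) (n.*2).+1) * (x * T ^+ j)
       + @kdelta R r.+1 j.+1 * T ^+ n * (x - T).

Definition wf (R : realType) (T x : R) (n i r : nat) : R :=
  if ((n - i < r.+1) && (r.+1 <= n))%N then x * T ^+ i.-1
  else if ((n < r.+1) && (r.+1 <= n + i))%N then -1 else 0.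

Ltac split_ifs := repeat (case: ifP => ?; try (exfalso; lia)).

Lemma key (R : realType) (T x : R) (n i r : nat) :
  (1 <= i <= n)%N -> (r < n.*2)%N ->
  \sum_(j < n.*2) Mf T x n r j * wf T x n i j = - T ^+ n.+1 * wf T x n i r.
Proof.
move=> /andP[i1 iln] rlt.
pose PL j : R := if (n.*2 <= r + j)%N then T ^+ j.+1 else 0.
pose PR j : R := (if (n.*2 <= r + j)%N then x * T ^+ j else 0)
   + (if (r < j)%N then T ^+ n * (x - T) else 0).
rewrite -(big_mkord xpredT (fun j => Mf T x n r j * wf T x n i j)).
rewrite (big_cat_nat _ (n := n)) /=; [|lia|lia].
rewrite (big_cat_nat _ (n := n - i)) /=; [|lia|lia].
rewrite (big_cat_nat _ (m := n) (n := n + i)) /=; [|lia|lia].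
rewrite (telescope_sumr_eq (fun _ => 0)); [|lia|]; last first.
  move=> k /andP[_ kl]; rewrite /wf; split_ifs; by rewrite mulr0 subr0.
rewrite (telescope_sumr_eq (fun j => x * T ^+ i.-1 * PL j)); [|lia|]; last first.
  move=> k /andP[k1 k2]; rewrite /wf /Mf /PL /kdelta; split_ifs; rewrite ?exprS; ring.
rewrite (telescope_sumr_eq (fun j => - PR j)); [|lia|]; last first.
  move=> k /andP[k1 k2]; rewrite /wf /Mf /PR /kdelta; split_ifs; rewrite ?exprS; ring.
rewrite (telescope_sumr_eq (fun _ => 0)); [|lia|]; last first.
  move=> k /andP[k1 k2]; rewrite /wf; split_ifs; by rewrite mulr0 subr0.
case: i i1 iln => [//|i'] _ iln.
have [m Hm] : exists m, n = (m + i'.+1)%N by exists (n - i'.+1)%N; lia.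
subst n; rewrite /PL /PR /wf /=.
have -> : (m + i'.+1 - i'.+1 = m)%N by lia.
split_ifs; rewrite ?(exprD, exprS); ring.
Qed.

Lemma powR_nat_e (R : realType) (T e : R) (j : nat) : 0 < T ->
  T `^ (j.+1%:R + e - 1) = T `^ e * T ^+ j.
Proof.
move=> T0; have -> : j.+1%:R + e - 1 = e + j%:R by rewrite -addn1 natrD; ring.
rewrite powRD; last by apply/implyP => _; rewrite gt_eqF.
by rewrite powR_mulrn // ltW.
Qed.

Theorem mainTheorem9 (R : realType) (n q : nat) (e : R) (i : nat) :
  (2 <= n)%N -> prime_power q -> (1 <= i <= n)%N ->
  vvec n i e (q%:R) != 0 /\
  Qmat n e (q%:R) *m vvec n i e (q%:R)
    = (- ((q%:R : R) `^ ((n%:R - 1) * (n%:R - 1 + e)))) *: vvec n i e (q%:R).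
Proof.
move=> n2 [p [k [pp [k0 qE]]]] /andP[i1 iln].
have qpos : (0 < q)%N by rewrite qE expn_gt0 prime_gt0.
have T0 : (0 : R) < q%:R by rewrite ltr0n.
set T : R := q%:R in T0 *.
set c : R := T `^ (n%:R * (n%:R + e - 3) - e).
set x : R := T `^ e.
have vE : forall r : 'I_(n.*2), vvec n i e T r ord0 = wf T x n i r.
  move=> r; rewrite /vvec /wf mxE.
  case: ifP => // _; case: i i1 iln => [//|i'] _ _.
  have -> : e + i'.+1%:R - 1 = e + i'%:R by rewrite -addn1 natrD; ring.
  by rewrite powRD ?powR_mulrn ?ltW //; apply/implyP => _; rewrite gt_eqF.
have QE : forall r j : 'I_(n.*2), Qmat n e T r j = c * Mf T x n r j.
  move=> r j; rewrite /Qmat /Mf mxE /=.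
  case: ifP => _; first by rewrite mulr0.
  case: ifP => _; first by rewrite mulrA.
  rewrite powR_nat_e //; congr (_ * (_ + _)).
have lamE : T `^ ((n%:R - 1) * (n%:R - 1 + e)) = c * T ^+ n.+1.
  have -> : (n%:R - 1) * (n%:R - 1 + e) = (n%:R * (n%:R + e - 3) - e) + (n.+1)%:R.
    by rewrite -addn1 natrD; ring.
  rewrite powRD ?powR_mulrn ?ltW //; apply/implyP => _; rewrite gt_eqF //.
split.
  apply/negP => /eqP H.
  have nlt : (n < n.*2)%N by rewrite -addnn; lia.
  have := congr1 (fun M : 'cV[R]_(n.*2) => M (Ordinal nlt) ord0) H.
  rewrite /= !mxE /=.
  have -> : ((n - i < n.+1) && (n.+1 <= n))%N = false by lia.
  have -> : ((n < n.+1) && (n.+1 <= n + i))%N = true by lia.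
  by move/eqP; rewrite oppr_eq0 oner_eq0.
apply/matrixP => r l; rewrite ord1 mxE [X in _ = X]mxE.
under eq_bigr => j _ do rewrite QE vE.
rewrite vE lamE.
under eq_bigr => j _ do rewrite -mulrA.
rewrite -mulr_sumr key ?i1 ?iln //; ring.
Qed.
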